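(* Let $\mathscr{H}$ be a complex Hilbert space and $A\in\mathbb{B}(\mathscr{H})$. Then $$\frac{1}{4}\, w^2\left(|A|+i|A^*|\right)+\frac{1}{8}\left\||A|^2+|A^*|^2\right\|+\frac{1}{4}\,w\left(|A||A^*|\right)\leq \frac{1}{2}\left\|A^*A+AA^*\right\|.$$
   Context: $\mathbb{B}(\mathscr{H})$ denotes the algebra of bounded linear operators on $\mathscr{H}$; $\|\cdot\|$ is the operator norm. For $T\in\mathbb{B}(\mathscr{H})$, $|T|=(T^*T)^{1/2}$, and $w(T)=\sup\{|\langle Tx,x\rangle|: \|x\|=1\}$ is the numerical radius. *)

(* Defs.v *)
From HB Require Import structures.
From mathcomp Require Import all_boot all_order all_algebra.
From mathcomp Require Import boolp classical_sets reals.
From mathcomp Require Import complex.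
Set Implicit Arguments. Unset Strict Implicit. Unset Printing Implicit Defensive.
Import Order.TTheory GRing.Theory Num.Theory.
Local Open Scope ring_scope.

Definition is_inner_product (R : realType) (V : lmodType R[i])
  (ip : V -> V -> R[i]) : Prop :=
  [/\ (forall (a : R[i]) (x1 x2 y : V), ip (a *: x1 + x2) y = a * ip x1 y + ip x2 y),
      (forall x y : V, ip y x = conjc (ip x y)),
      (forall x : V, 0 <= ip x x) &
      (forall x : V, ip x x = 0 -> x = 0)].

Definition hnorm (R : realType) (V : lmodType R[i]) (ip : V -> V -> R[i])
  (x : V) : R := Num.sqrt (complex.Re (ip x x)).

Definition hcomplete (R : realType) (V : lmodType R[i]) (ip : V -> V -> R[i]) : Prop :=
  forall u : nat -> V,
    (forall e : R, 0 < e -> exists N : nat, forall m n : nat,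
        (N <= m)%N -> (N <= n)%N -> hnorm ip (u m - u n) < e) ->
    exists l : V, forall e : R, 0 < e -> exists N : nat, forall n : nat,
        (N <= n)%N -> hnorm ip (u n - l) < e.

Definition bounded_op (R : realType) (V : lmodType R[i]) (ip : V -> V -> R[i])
  (T : V -> V) : Prop :=
  (forall (a : R[i]) (x y : V), T (a *: x + y) = a *: T x + T y) /\
  exists M : R, forall x : V, hnorm ip (T x) <= M * hnorm ip x.

Definition opnorm (R : realType) (V : lmodType R[i]) (ip : V -> V -> R[i])
  (T : V -> V) : R :=
  sup [set r : R | exists x : V, hnorm ip x = 1 /\ r = hnorm ip (T x)].

Definition numrad (R : realType) (V : lmodType R[i]) (ip : V -> V -> R[i])
  (T : V -> V) : R :=
  sup [set r : R | exists x : V, hnorm ip x = 1 /\ r = Normc.normc (ip (T x) x)].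

Definition is_adjoint (R : realType) (V : lmodType R[i]) (ip : V -> V -> R[i])
  (T S : V -> V) : Prop :=
  forall x y : V, ip (T x) y = ip x (S y).

Definition positive_op (R : realType) (V : lmodType R[i]) (ip : V -> V -> R[i])
  (P : V -> V) : Prop :=
  bounded_op ip P /\ forall x : V, 0 <= ip (P x) x.

(* P = |T| := (T^* T)^{1/2}: the (unique) positive square root of T^* T,
   where Ts is the adjoint of T. *)
Definition is_abs_op (R : realType) (V : lmodType R[i]) (ip : V -> V -> R[i])
  (T Ts P : V -> V) : Prop :=
  positive_op ip P /\ forall x : V, P (P x) = Ts (T x).

(* Main.v *)
Require Import Defs.
From HB Require Import structures.
From mathcomp Require Import all_boot all_order all_algebra.
From mathcomp Require Import boolp classical_sets reals.
From mathcomp Require Import complex.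
From mathcomp Require Import ring lra.
Set Implicit Arguments. Unset Strict Implicit. Unset Printing Implicit Defensive.
Import Order.TTheory GRing.Theory Num.Theory.
Local Open Scope ring_scope.
Local Open Scope complex_scope.
Local Open Scope classical_set_scope.
Local Notation Re := complex.Re.
Local Notation Im := complex.Im.

Lemma cjD (R : realType) (a b : R[i]) : conjc (a + b) = conjc a + conjc b.
Proof. by case: a => a1 a2; case: b => b1 b2; rewrite /conjc /= opprD. Qed.

Lemma cjM (R : realType) (a b : R[i]) : conjc (a * b) = conjc a * conjc b.
Proof.
case: a => a1 a2; case: b => b1 b2; rewrite /conjc /=.
by congr (_ +i* _); ring.
Qed.

Lemma cplx_eq (R : realType) (a b : R[i]) : Re a = Re b -> Im a = Im b -> a = b.
Proof. by case: a => a1 a2; case: b => b1 b2 /= -> ->. Qed.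

Lemma ReD (R : realType) (a b : R[i]) : Re (a + b) = Re a + Re b.
Proof. by case: a => a1 a2; case: b. Qed.
Lemma ImD (R : realType) (a b : R[i]) : Im (a + b) = Im a + Im b.
Proof. by case: a => a1 a2; case: b. Qed.
Lemma ReM (R : realType) (a b : R[i]) : Re (a * b) = Re a * Re b - Im a * Im b.
Proof. by case: a => a1 a2; case: b. Qed.
Lemma ImM (R : realType) (a b : R[i]) : Im (a * b) = Re a * Im b + Im a * Re b.
Proof. by case: a => a1 a2; case: b. Qed.
Lemma Recj (R : realType) (a : R[i]) : Re (conjc a) = Re a.
Proof. by case: a. Qed.
Lemma Imcj (R : realType) (a : R[i]) : Im (conjc a) = - Im a.
Proof. by case: a. Qed.
Lemma Rei (R : realType) : Re ('i : R[i]) = 0. Proof. by []. Qed.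
Lemma Imi (R : realType) : Im ('i : R[i]) = 1. Proof. by []. Qed.
Lemma ReC (R : realType) (t : R) : Re (t%:C) = t. Proof. by []. Qed.
Lemma ImC (R : realType) (t : R) : Im (t%:C) = 0. Proof. by []. Qed.

Lemma ipD (R : realType) (V : lmodType R[i]) (ip : V -> V -> R[i])
  (Hip : is_inner_product ip) x y z : ip (x + y) z = ip x z + ip y z.
Proof. case: Hip => H1 _ _ _. by rewrite -[x in LHS]scale1r H1 mul1r. Qed.

Lemma ipZ (R : realType) (V : lmodType R[i]) (ip : V -> V -> R[i])
  (Hip : is_inner_product ip) a x z : ip (a *: x) z = a * ip x z.
Proof.
case: Hip => H1 _ _ _.
have H0 : ip 0 z = 0.
  have := H1 1 0 0 z; rewrite scale1r addr0 mul1r => E.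
  by apply: (addrI (ip 0 z)); rewrite addr0 -E.
by rewrite -[a *: x]addr0 H1 H0 addr0.
Qed.

Lemma ipC (R : realType) (V : lmodType R[i]) (ip : V -> V -> R[i])
  (Hip : is_inner_product ip) x y : ip y x = conjc (ip x y).
Proof. by case: Hip. Qed.

Lemma ipDr (R : realType) (V : lmodType R[i]) (ip : V -> V -> R[i])
  (Hip : is_inner_product ip) x y z : ip z (x + y) = ip z x + ip z y.
Proof. by rewrite (ipC Hip) (ipD Hip) cjD -!(ipC Hip). Qed.

Lemma ipZr (R : realType) (V : lmodType R[i]) (ip : V -> V -> R[i])
  (Hip : is_inner_product ip) a x z : ip z (a *: x) = conjc a * ip z x.
Proof. by rewrite (ipC Hip) (ipZ Hip) cjM -!(ipC Hip). Qed.

Lemma Im_ipxx (R : realType) (V : lmodType R[i]) (ip : V -> V -> R[i])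
  (Hip : is_inner_product ip) x : Im (ip x x) = 0.
Proof. case: Hip => _ _ H _. move: (H x); case: (ip x x) => a b. by rewrite lecE /= => /andP[/eqP <- _]. Qed.

Lemma Re_ipxx (R : realType) (V : lmodType R[i]) (ip : V -> V -> R[i])
  (Hip : is_inner_product ip) x : 0 <= Re (ip x x).
Proof. case: Hip => _ _ H _. move: (H x); case: (ip x x) => a b. by rewrite lecE /= => /andP[]. Qed.

Lemma ipxx0 (R : realType) (V : lmodType R[i]) (ip : V -> V -> R[i])
  (Hip : is_inner_product ip) x : Re (ip x x) = 0 -> x = 0.
Proof.
move=> H; case: (Hip) => _ _ _ H4; apply: H4; apply: cplx_eq => //.
by rewrite (Im_ipxx Hip).
Qed.

Lemma ip0r (R : realType) (V : lmodType R[i]) (ip : V -> V -> R[i])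
  (Hip : is_inner_product ip) x : ip x 0 = 0.
Proof. by rewrite -(scale0r (0:V)) (ipZr Hip) /conjc /= oppr0 mul0r. Qed.

Lemma ip_expand (R : realType) (V : lmodType R[i]) (ip : V -> V -> R[i])
  (Hip : is_inner_product ip) x y (t : R) :
  Re (ip (x + t%:C *: y) (x + t%:C *: y)) =
  Re (ip x x) + 2 * t * Re (ip x y) + t ^+ 2 * Re (ip y y).
Proof.
rewrite !(ipD Hip) !(ipDr Hip) !(ipZ Hip) !(ipZr Hip) (ipC Hip y x).
rewrite !ReD !ReM !ImM !Recj !Imcj (Im_ipxx Hip y) /=.
ring.
Qed.

Lemma CSre (R : realType) (V : lmodType R[i]) (ip : V -> V -> R[i])
  (Hip : is_inner_product ip) x y :
  Re (ip x y) ^+ 2 <= Re (ip x x) * Re (ip y y).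
Proof.
have ha := Re_ipxx Hip x; have hc := Re_ipxx Hip y.
have [c0|cpos] := eqVneq (Re (ip y y)) 0.
  by rewrite (ipxx0 Hip c0) !(ip0r Hip) /= expr0n /= mulr0.
have cp : 0 < Re (ip y y) by rewrite lt_def cpos hc.
set a := Re (ip x x) in ha *; set b := Re (ip x y); set c := Re (ip y y) in cp hc cpos *.
have := Re_ipxx Hip (x + (- b / c)%:C *: y); rewrite (ip_expand Hip) -/a -/b -/c.
set t := - b / c.
have tc : t * c = - b by rewrite /t mulrVK // unitfE.
move=> H; nra.
Qed.

Lemma CS (R : realType) (V : lmodType R[i]) (ip : V -> V -> R[i])
  (Hip : is_inner_product ip) x y :
  Re (ip x y) ^+ 2 + Im (ip x y) ^+ 2 <= Re (ip x x) * Re (ip y y).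
Proof.
have ha := Re_ipxx Hip x; have hc := Re_ipxx Hip y.
have := CSre Hip x (ip x y *: y).
rewrite (ipZr Hip) (ipZ Hip) (ipZr Hip) !ReM !ImM !Recj !Imcj (Im_ipxx Hip y).
set a := Re (ip x x) in ha *; set c := Re (ip y y) in hc *.
set n := Re (ip x y) ^+ 2 + Im (ip x y) ^+ 2.
have hn : 0 <= n by rewrite /n addr_ge0 // sqr_ge0.
have hp : 0 <= a * c by rewrite mulr_ge0.
set p := a * c in hp *.
move=> H.
have H' : n ^+ 2 <= p * n.
  move: H; rewrite /n /p /=. move=> H; nra.
nra.
Qed.

Lemma lin0 (R : realType) (V : lmodType R[i]) (T : V -> V) :
  (forall (a : R[i]) (x y : V), T (a *: x + y) = a *: T x + T y) -> T 0 = 0.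
Proof.
move=> H; have := H 1 0 0; rewrite !scale1r addr0 => E.
by apply: (addrI (T 0)); rewrite addr0 -E.
Qed.

Lemma linD (R : realType) (V : lmodType R[i]) (T : V -> V) :
  (forall (a : R[i]) (x y : V), T (a *: x + y) = a *: T x + T y) ->
  forall x y, T (x + y) = T x + T y.
Proof. by move=> H x y; rewrite -[x in LHS]scale1r H scale1r. Qed.

Lemma linZ (R : realType) (V : lmodType R[i]) (T : V -> V) :
  (forall (a : R[i]) (x y : V), T (a *: x + y) = a *: T x + T y) ->
  forall a x, T (a *: x) = a *: T x.
Proof. by move=> H a x; rewrite -[a *: x]addr0 H (lin0 H) addr0. Qed.

Lemma pos_sa (R : realType) (V : lmodType R[i]) (ip : V -> V -> R[i])
  (Hip : is_inner_product ip) P :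
  positive_op ip P -> forall x y, ip (P x) y = ip x (P y).
Proof.
case=> [[Hl _] Hp] x y.
have Him : forall z, Im (ip (P z) z) = 0.
  by move=> z; move: (Hp z); case: (ip (P z) z) => a b; rewrite lecE /= => /andP[/eqP <- _].
have E1 := Him (x + y).
rewrite (linD Hl) !(ipD Hip) !(ipDr Hip) !ImD (Him x) (Him y) in E1.
have E2 := Him (x + 'i *: y).
rewrite (linD Hl) (linZ Hl) !(ipD Hip) !(ipDr Hip) !(ipZ Hip) !(ipZr Hip) !ImD !ImM
  !Recj !Imcj (Him x) (Him y) /= in E2.
rewrite !ReM /= (Him y) in E2.
rewrite [RHS](ipC Hip); apply: cplx_eq; rewrite ?Recj ?Imcj; lra.
Qed.

Lemma hn_ge0 (R : realType) (V : lmodType R[i]) (ip : V -> V -> R[i]) x :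
  0 <= hnorm ip x.
Proof. exact: sqrtr_ge0. Qed.

Lemma hn_sq (R : realType) (V : lmodType R[i]) (ip : V -> V -> R[i])
  (Hip : is_inner_product ip) x : hnorm ip x ^+ 2 = Re (ip x x).
Proof. by rewrite /hnorm sqr_sqrtr // (Re_ipxx Hip). Qed.

Lemma nc_ge0 (R : realType) (z : R[i]) : 0 <= Normc.normc z.
Proof. by case: z => a b; exact: sqrtr_ge0. Qed.

Lemma nc_sq (R : realType) (z : R[i]) : Normc.normc z ^+ 2 = Re z ^+ 2 + Im z ^+ 2.
Proof. by case: z => a b /=; rewrite sqr_sqrtr // addr_ge0 // sqr_ge0. Qed.

Lemma nc_le (R : realType) (V : lmodType R[i]) (ip : V -> V -> R[i])
  (Hip : is_inner_product ip) x y :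
  Normc.normc (ip x y) <= hnorm ip x * hnorm ip y.
Proof.
have := CS Hip x y; rewrite -nc_sq -!(hn_sq Hip) => H.
have h1 := nc_ge0 (ip x y); have h2 := hn_ge0 ip x; have h3 := hn_ge0 ip y.
have h4 : 0 <= hnorm ip x * hnorm ip y by rewrite mulr_ge0.
move: H h1 h4; set n := Normc.normc _; set p := hnorm ip x * hnorm ip y.
rewrite -exprMn -/p => H h1 h4; nra.
Qed.

Lemma re_le (R : realType) (V : lmodType R[i]) (ip : V -> V -> R[i])
  (Hip : is_inner_product ip) x y :
  Re (ip x y) <= hnorm ip x * hnorm ip y.
Proof.
apply: le_trans (nc_le Hip x y).
have := nc_sq (ip x y); have := nc_ge0 (ip x y).
have := sqr_ge0 (Im (ip x y)).
move: (Re (ip x y)) (Im (ip x y)) (Normc.normc (ip x y)) => r i m h0 h1 h2. nra.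
Qed.

Lemma hn_tri (R : realType) (V : lmodType R[i]) (ip : V -> V -> R[i])
  (Hip : is_inner_product ip) x y :
  hnorm ip (x + y) <= hnorm ip x + hnorm ip y.
Proof.
have e := hn_sq Hip (x + y).
rewrite !(ipD Hip) !(ipDr Hip) !ReD (ipC Hip y x) Recj -!(hn_sq Hip) in e.
have := re_le Hip y x; have := hn_ge0 ip x; have := hn_ge0 ip y;
have := hn_ge0 ip (x + y).
move: e; set s := hnorm ip (x + y); set a := hnorm ip x; set c := hnorm ip y.
move=> e h1 h2 h3 h4.
have h5 : 0 <= s + a + c by rewrite !addr_ge0.
nra.
Qed.

Theorem mainTheorem2 (R : realType) (V : lmodType R[i]) (ip : V -> V -> R[i])
  (Hip : is_inner_product ip) (Hcomplete : hcomplete ip)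
  (A As absA absAs : V -> V)
  (HA : bounded_op ip A) (HAs : is_adjoint ip A As)
  (HabsA : is_abs_op ip A As absA) (HabsAs : is_abs_op ip As A absAs) :
  4^-1 * numrad ip (fun x => absA x + 'i%C *: absAs x) ^+ 2
  + 8^-1 * opnorm ip (fun x => absA (absA x) + absAs (absAs x))
  + 4^-1 * numrad ip (fun x => absA (absAs x))
  <= 2^-1 * opnorm ip (fun x => As (A x) + A (As x)).
Proof.
case: (HabsA) => HPpos HP2; case: (HabsAs) => HQpos HQ2.
have HPsa := pos_sa Hip HPpos; have HQsa := pos_sa Hip HQpos.
case: (HPpos) => [[HPl [M1 HM1]] HPp]; case: (HQpos) => [[HQl [M2 HM2]] HQp].
have -> : (fun x => absA (absA x) + absAs (absAs x)) = (fun x => As (A x) + A (As x)).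
  by apply: funext => x /=; congr (_ + _); [apply: HP2 | apply: HQ2].
set S := (fun x => As (A x) + A (As x)).
set P := absA; set Q := absAs.
have hS : forall x, S x = P (P x) + Q (Q x) by move=> x; rewrite /S /P /Q HP2 HQ2.
have ImP : forall x, Im (ip (P x) x) = 0.
  by move=> z; move: (HPp z); case: (ip (P z) z) => a b; rewrite lecE /= => /andP[/eqP <- _].
have ImQ : forall x, Im (ip (Q x) x) = 0.
  by move=> z; move: (HQp z); case: (ip (Q z) z) => a b; rewrite lecE /= => /andP[/eqP <- _].
have k3 : forall x, Re (ip (S x) x) = hnorm ip (P x) ^+ 2 + hnorm ip (Q x) ^+ 2.
  move=> x; rewrite hS (ipD Hip) ReD (HPsa (P x)) (HQsa (Q x)) -!(hn_sq Hip) //.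
have unit1 : forall x, hnorm ip x = 1 -> Re (ip x x) = 1.
  by move=> x hx; rewrite -(hn_sq Hip) hx expr1n.
pose ES := [set r : R | exists x, hnorm ip x = 1 /\ r = hnorm ip (S x)].
have ubS : has_ubound ES.
  exists (M1 * M1 + M2 * M2) => r [x [hx ->]].
  rewrite hS; apply: le_trans (hn_tri Hip _ _) _.
  have a1 := HM1 x; have a2 := HM1 (P x); have b1 := HM2 x; have b2 := HM2 (Q x).
  rewrite hx in a1 b1.
  have := hn_ge0 ip (P x); have := hn_ge0 ip (Q x).
  move: a1 a2 b1 b2; rewrite !mulr1.
  move: (hnorm ip (P x)) (hnorm ip (P (P x))) (hnorm ip (Q x)) (hnorm ip (Q (Q x))).
  move=> p pp q qq a1 a2 b1 b2 h1 h2; nra.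
have kN : forall x, hnorm ip x = 1 -> Re (ip (S x) x) <= opnorm ip S.
  move=> x hx; apply: le_trans (re_le Hip _ _) _; rewrite hx mulr1.
  by apply: (ub_le_sup ubS); exists x.
have [[x0 hx0]|nox] := pselect (exists x, hnorm ip x = 1); last first.
  have E0 : forall T : V -> V,
      [set r : R | exists x, hnorm ip x = 1 /\ r = hnorm ip (T x)] = set0.
    by move=> T; apply/seteqP; split => // r [x [hx _]]; apply: nox; exists x.
  have F0 : forall T : V -> V,
      [set r : R | exists x, hnorm ip x = 1 /\ r = Normc.normc (ip (T x) x)] = set0.
    by move=> T; apply/seteqP; split => // r [x [hx _]]; apply: nox; exists x.
  rewrite /numrad /opnorm !E0 !F0 !sup0; lra.
have N0 : 0 <= opnorm ip S.
  by apply: le_trans (kN _ hx0); rewrite k3; apply: addr_ge0; apply: sqr_ge0.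
move: kN N0; set N := opnorm ip S => kN N0.
have w1 : forall x, hnorm ip x = 1 ->
    Normc.normc (ip (P x + 'i%C *: Q x) x) ^+ 2 <= N.
  move=> x hx; apply: le_trans (kN x hx); rewrite k3 nc_sq.
  rewrite (ipD Hip) (ipZ Hip) ReD ImD ReM ImM ImP ImQ /=.
  have c1 := CSre Hip (P x) x; have c2 := CSre Hip (Q x) x.
  rewrite (unit1 x hx) -!(hn_sq Hip) in c1 c2; lra.
have w2 : forall x, hnorm ip x = 1 -> Normc.normc (ip (P (Q x)) x) <= N / 2.
  move=> x hx; have := kN x hx; rewrite k3 => hk.
  rewrite (HPsa (Q x) x).
  have := nc_le Hip (Q x) (P x).
  have := hn_ge0 ip (P x); have := hn_ge0 ip (Q x).
  move: hk; move: (Normc.normc _) (hnorm ip (P x)) (hnorm ip (Q x)) => n p q hk h1 h2 h3.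
  have := sqr_ge0 (p - q); nra.
pose E1 := [set r : R | exists x, hnorm ip x = 1 /\ r = Normc.normc (ip (P x + 'i%C *: Q x) x)].
have ub1 : ubound E1 (Num.sqrt N).
  move=> r [x [hx ->]]; have := w1 x hx; have := nc_ge0 (ip (P x + 'i%C *: Q x) x).
  have := sqr_sqrtr N0; have := sqrtr_ge0 N.
  move: (Num.sqrt N) (Normc.normc _) => s n h1 h2 h3 h4; nra.
have ne1 : E1 !=set0 by exists (Normc.normc (ip (P x0 + 'i%C *: Q x0) x0)), x0.
have up1 : numrad ip (fun x => P x + 'i%C *: Q x) <= Num.sqrt N by apply: ge_sup.
have lo1 : 0 <= numrad ip (fun x => P x + 'i%C *: Q x).
  apply: le_trans (nc_ge0 (ip (P x0 + 'i%C *: Q x0) x0)) _.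
  by apply: (ub_le_sup (ex_intro _ _ ub1)); exists x0.
have sq1 : numrad ip (fun x => P x + 'i%C *: Q x) ^+ 2 <= N.
  have := sqr_sqrtr N0; have := sqrtr_ge0 N.
  move: up1 lo1; move: (Num.sqrt N) (numrad _ _) => s n h1 h2 h3 h4; nra.
have up2 : numrad ip (fun x => P (Q x)) <= N / 2.
  apply: ge_sup; first by exists (Normc.normc (ip (P (Q x0)) x0)), x0.
  by move=> r [x [hx ->]]; apply: w2.
move: sq1 up2; move: (numrad _ (fun x => P x + _)) (numrad _ (fun x => P (Q x))).
move=> a b h1 h2; lra.
Qed.
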